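(* Let $R$ be a ranking profile over $m$ candidates and let $\rhd=x_1,\dots,x_m$ be the ranking chosen by the Ranked Method of Equal Shares. Then for all $i\in\{1,\dots,\lfloor m/4\rfloor\}$, $\rho_i=\frac{m-i}{U(b_1,x_i,\{x_i,\dots,x_m\})}$ and $x_i\in\arg\max_{x\in\{x_i,\dots,x_m\}}U(b_1,x,\{x_i,\dots,x_m\})$.
   Context: Let $C$ be a set of $m$ candidates. A ranking is a strict linear order over $C$; $\mathcal{R}$ denotes the set of all rankings over $C$. A ranking profile is a function $R:\mathcal{R}\to[0,1]$ with $\sum_{\succ}R(\succ)=1$. For a ranking $\succ$ and $x\in X\subseteq C$, $u(\succ,x,X)=|\{y\in X\setminus\{x\}: x\succ y\}|$; for $b:\mathcal{R}\to\mathbb{R}_{\geq0}$, $U(b,x,X)=\sum_{\succ}b(\succ)u(\succ,x,X)$. Ranked Method of Equal Shares: set $X_1=C$, $b_1(\succ)=R(\succ)\binom{m}{2}$. In each round $i\in\{1,\dots,m-2\}$, for each $x\in X_i$ let $\rho_x$ be the smallest $\rho\geq0$ with $\sum_{\succ\in\mathcal{R}}\min\big(\rho\,b_1(\succ)u(\succ,x,X_i),\,b_i(\succ),\,u(\succ,x,X_i)\big)=m-i$ ($\rho_x=\infty$ if none exists); choose $x_i$ minimizing $\rho_x$ (ties broken arbitrarily), set $\rho_i=\rho_{x_i}$, place $x_i$ at position $i$, set $X_{i+1}=X_i\setminus\{x_i\}$ and $b_{i+1}(\succ)=b_i(\succ)-\min(\rho_i b_1(\succ)u(\succ,x_i,X_i),b_i(\succ),u(\succ,x_i,X_i))$.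 The last two candidates are ordered by majority with respect to the remaining budgets $b_{m-1}$. *)

(* Defs.v *)
From HB Require Import structures.
From mathcomp Require Import all_boot all_order all_algebra all_fingroup.
From mathcomp Require Import reals.
Set Implicit Arguments. Unset Strict Implicit. Unset Printing Implicit Defensive.
Import Order.TTheory GRing.Theory Num.Theory.
Local Open Scope ring_scope.

(* Candidates are 'I_m; a ranking is a permutation s : 'S_m, where s x is the
   position of candidate x (0 = top).  x is ranked above y iff s x < s y. *)
Definition ranks_above (m : nat) (s : 'S_m) (x y : 'I_m) : bool := (s x < s y)%N.

Definition u_score (m : nat) (s : 'S_m) (x : 'I_m) (X : {set 'I_m}) : nat :=
  #|[set y in X | (y != x) && ranks_above s x y]|.

Definition U_score (R : realType) (m : nat) (b : 'S_m -> R) (x : 'I_m)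
  (X : {set 'I_m}) : R :=
  \sum_(s : 'S_m) b s * (u_score s x X)%:R.

Definition pay_sum (R : realType) (m : nat) (b1 bi : 'S_m -> R) (x : 'I_m)
  (X : {set 'I_m}) (r : R) : R :=
  \sum_(s : 'S_m) Num.min (r * b1 s * (u_score s x X)%:R)
                          (Num.min (bi s) (u_score s x X)%:R).

(* rho values live in option R, None meaning +infinity. *)
Definition rho_spec (R : realType) (m : nat) (b1 bi : 'S_m -> R)
  (X : {set 'I_m}) (t : R) (x : 'I_m) (o : option R) : Prop :=
  match o with
  | Some r => 0 <= r /\ pay_sum b1 bi x X r = t /\
              (forall r', 0 <= r' -> pay_sum b1 bi x X r' = t -> r <= r')
  | None => forall r', 0 <= r' -> pay_sum b1 bi x X r' <> t
  end.

Definition ole (R : realType) (o1 o2 : option R) : bool :=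
  match o1, o2 with
  | Some a, Some b => a <= b
  | _, None => true
  | None, Some _ => false
  end.

(* Remaining candidates before round i (1-indexed): C minus x_1..x_{i-1}. *)
Definition remaining (m : nat) (x : nat -> 'I_m) (i : nat) : {set 'I_m} :=
  [set y | y \notin map x (iota 1 i.-1)].

Definition payment (R : realType) (m : nat) (b1 bi : 'S_m -> R) (o : option R)
  (x : 'I_m) (X : {set 'I_m}) (s : 'S_m) : R :=
  match o with
  | Some r => Num.min (r * b1 s * (u_score s x X)%:R)
                      (Num.min (bi s) (u_score s x X)%:R)
  | None => Num.min (bi s) (u_score s x X)%:R
  end.

(* A complete execution of the Ranked Method of Equal Shares on profile P:
   x i is the candidate placed at position i (1-indexed), rho i = rho_i,
   b i = b_i.  Ties are broken arbitrarily (any run is allowed). *)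
Definition RMES_run (R : realType) (m : nat) (P : 'S_m -> R)
  (x : nat -> 'I_m) (rho : nat -> option R) (b : nat -> 'S_m -> R) : Prop :=
  (forall s, b 1%N s = P s * ('C(m, 2))%:R) /\
  (forall i : nat, (1 <= i <= m - 2)%N ->
     let X := remaining x i in
     let t := (m - i)%:R : R in
     x i \in X /\
     rho_spec (b 1%N) (b i) X t (x i) (rho i) /\
     (forall y o, y \in X -> rho_spec (b 1%N) (b i) X t y o -> ole (rho i) o) /\
     (forall s, b i.+1 s = b i s - payment (b 1%N) (b i) (rho i) (x i) X s)) /\
  ((2 <= m)%N ->
     x m.-1 != x m /\
     remaining x m.-1 = [set x m.-1; x m] /\
     \sum_(s : 'S_m | ranks_above s (x m) (x m.-1)) b m.-1 s <=
     \sum_(s : 'S_m | ranks_above s (x m.-1) (x m)) b m.-1 s).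

(* Main.v *)
Require Import Defs.
From HB Require Import structures.
From mathcomp Require Import all_boot all_order all_algebra all_fingroup.
From mathcomp Require Import reals.
From mathcomp.algebra_tactics Require Import ring lra.
From mathcomp Require Import zify.
Set Implicit Arguments. Unset Strict Implicit. Unset Printing Implicit Defensive.
Import Order.TTheory GRing.Theory Num.Theory.

Lemma bin2_dbl m : (2 * 'C(m, 2) = m * (m - 1))%N.
Proof.
elim: m => [|m IH] //; rewrite binS bin1 mulnDr IH; case: m {IH} => // m; nia.
Qed.
Lemma u_scoreE m (s : 'S_m) x (X : {set 'I_m}) :
  u_score s x X = \sum_(y in X) (s x < s y)%N.
Proof.
rewrite /u_score -sum1_card big_mkcond /= [RHS]big_mkcond /=.
apply: eq_bigr => y _; rewrite inE /ranks_above.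
case: (y \in X) => //=; case: eqP => [->|_] //=; by rewrite ltnn.
Qed.

Lemma u_le m (s : 'S_m) x (X : {set 'I_m}) : x \in X -> (u_score s x X <= #|X| - 1)%N.
Proof.
move=> xX; rewrite /u_score (cardsD1 x X) xX add1n subn1 /=.
apply: subset_leq_card; apply/subsetP => y; rewrite !inE.
by case/andP=> yX /andP[-> _]; rewrite yX.
Qed.

Lemma u_top m (s : 'S_m) (X : {set 'I_m}) t : t \in X -> exists2 y, y \in X & u_score s y X = (#|X| - 1)%N.
Proof.
move=> tX; exists [arg min_(y < t in X) s y].
  by case: arg_minnP.
case: arg_minnP => // y yX Hmin.
rewrite /u_score (cardsD1 y X) yX add1n subn1 /=.
apply: eq_card => z; rewrite !inE /ranks_above.
case zX: (z \in X); rewrite ?andbF ?andbT //=.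
case: eqP => [->|nzy] //=; rewrite ltn_neqAle Hmin // andbT.
apply/eqP => E; apply: nzy; by rewrite (perm_inj (val_inj E)).
Qed.

Lemma u_sum m (s : 'S_m) (X : {set 'I_m}) :
  (2 * \sum_(x in X) u_score s x X = #|X| * (#|X| - 1))%N.
Proof.
have E1 : (\sum_(x in X) u_score s x X = \sum_(x in X) \sum_(y in X) (s y < s x)%N)%N.
  under eq_bigr do rewrite u_scoreE.
  by rewrite exchange_big.
rewrite mul2n -addnn {2}E1.
under eq_bigr do rewrite u_scoreE.
rewrite -big_split /=.
rewrite -sum_nat_const; apply: eq_bigr => x xX.
rewrite -big_split /= (bigD1 x xX) /= ltnn add0n.
rewrite (cardsD1 x X) xX add1n subn1 /= -sum1_card.
apply: eq_big => [y|y /andP[_ nyx]]; first by rewrite !inE andbC.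
have : s x != s y by apply/eqP=> E; rewrite (perm_inj E) eqxx in nyx.
by rewrite -val_eqE /=; case: ltngtP.
Qed.

Local Open Scope ring_scope.

Lemma paysum_le (R : realType) m (b1 bi : 'S_m -> R) x X r :
  pay_sum b1 bi x X r <= r * U_score b1 x X.
Proof.
rewrite /pay_sum /U_score mulr_sumr; apply: ler_sum => s _.
by rewrite ge_min mulrA lexx.
Qed.

Lemma paysum_eq (R : realType) m (b1 bi : 'S_m -> R) x X r :
  (forall s, r * b1 s * (u_score s x X)%:R <= bi s /\
             r * b1 s * (u_score s x X)%:R <= (u_score s x X)%:R) ->
  pay_sum b1 bi x X r = r * U_score b1 x X.
Proof.
move=> H; rewrite /pay_sum /U_score mulr_sumr; apply: eq_bigr => s _.
have [H1 H2] := H s.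
by rewrite min_l ?mulrA // le_min H1 H2.
Qed.
Lemma round (R : realType) (m : nat) (b1 bi : 'S_m -> R) (X : {set 'I_m})
  (n : nat) (xw : 'I_m) (ro : option R) :
  (forall s, 0 <= b1 s) -> \sum_s b1 s = ('C(m, 2))%:R ->
  (0 < n)%N -> (n < m)%N -> (n.+1 <= #|X|)%N ->
  (forall s, 4 * b1 s <= m%:R * bi s) ->
  xw \in X ->
  rho_spec b1 bi X n%:R xw ro ->
  (forall y o, y \in X -> rho_spec b1 bi X n%:R y o -> ole ro o) ->
  ro = Some (n%:R / U_score b1 xw X) /\
  (forall y, y \in X -> U_score b1 y X <= U_score b1 xw X) /\
  (forall s, m%:R * payment b1 bi ro xw X s <= 4 * b1 s).
Proof.
move=> b1ge0 sumb1 n0 nm nk Hbud xwX spec_xw Hmin.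
set k := #|X|.
set U := fun y => U_score b1 y X.
have Uge0 : forall y, 0 <= U y.
  by move=> y; apply: sumr_ge0 => s _; rewrite mulr_ge0.
set c : R := ('C(m, 2))%:R.
have c2 : 2 * c = m%:R * (m%:R - 1).
  by rewrite /c -natrM bin2_dbl natrM natrB ?(leq_trans _ nm).
have mgt1 : 1 < m%:R :> R by rewrite ltr1n (leq_ltn_trans n0 nm).
set K : R := (k - 1)%:R.
have Kn : n%:R <= K by rewrite /K ler_nat; lia.
have n1 : 1 <= n%:R :> R by rewrite ler1n.
have Usum : (\sum_(y in X) U y) * 2 = c * (k%:R * K).
  rewrite /U /U_score exchange_big /= mulr_suml.
  rewrite /c -sumb1 mulr_suml; apply: eq_bigr => s _.
  rewrite -mulr_sumr -mulrA -natr_sum.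
  by congr (_ * _); rewrite /K -!natrM mulnC u_sum.
case: (arg_maxP (fun y => U y) xwX) => ys ysX ysmax.
set Um := U ys.
have UmK : c * K <= 2 * Um.
  have H : \sum_(y in X) U y <= k%:R * Um.
    rewrite mulr_natl -sumr_const; apply: ler_sum => y yX; exact: ysmax.
  have kpos : 0 < k%:R :> R by rewrite ltr0n; lia.
  rewrite -(ler_pM2l kpos); lra.
have Kpos : 0 < K by lra.
have cpos : 0 < c by nra.
have Umpos : 0 < Um by nra.
have topb : forall s, b1 s * n%:R <= Um.
  move=> s; have [t tX ut] := u_top s xwX.
  apply: le_trans (ysmax t tX); rewrite /U /U_score (bigD1 s) //= ut.
  rewrite -[X in X <= _]addr0 lerD //; first by rewrite ler_wpM2l.
  by apply: sumr_ge0 => s' _; rewrite mulr_ge0.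
set r0 := n%:R / Um.
have r0pos : 0 < r0 by rewrite divr_gt0 // ltr0n.
have biK : forall s, r0 * b1 s * K <= bi s /\ m%:R * (r0 * b1 s * K) <= 4 * b1 s.
  move=> s; have := Hbud s; have := b1ge0 s => h0 h1.
  set d := 2 * n%:R * b1 s / c.
  have dge0 : 0 <= d by rewrite /d divr_ge0 ?mulr_ge0 //; lra.
  have e1 : r0 * b1 s * K <= d.
    have -> : r0 * b1 s * K = (n%:R * b1 s * K) / Um by rewrite /r0; field; lra.
    rewrite ler_pdivrMr //.
    have -> : n%:R * b1 s * K = d * (c * K) / 2 by rewrite /d; field; lra.
    rewrite ler_pdivrMr; last lra.
    rewrite -mulrA; apply: ler_wpM2l => //; lra.
  have e2 : m%:R * d <= 4 * b1 s.
    have em : m%:R * d * (m%:R - 1) = 4 * n%:R * b1 s.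
      rewrite /d -mulrA mulrCA -c2; field; lra.
    have nm1 : n%:R <= m%:R - 1 :> R.
      have : (n.+1)%:R <= m%:R :> R by rewrite ler_nat.
      rewrite -natr1 => h; lra.
    have : m%:R * d * (m%:R - 1) <= 4 * b1 s * (m%:R - 1) by rewrite em; nra.
    by rewrite ler_pM2r; lra.
  split; [|nra]; nra.
have uK : forall s y, y \in X -> (u_score s y X)%:R <= K.
  by move=> s y yX; rewrite /K ler_nat u_le.
have r0U : r0 * Um = n%:R by rewrite /r0; field; lra.
have cap1 : forall s, r0 * b1 s <= 1.
  move=> s; rewrite /r0 mulrAC ler_pdivrMr // mul1r mulrC; exact: topb.
have spec_ys : rho_spec b1 bi X n%:R ys (Some r0).
  split; first lra.
  split.
    rewrite paysum_eq -/(U ys) -/Um //.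
    move=> s; have := uK s ys ysX; have := biK s; have := cap1 s.
    have := b1ge0 s; have : 0 <= (u_score s ys X)%:R :> R by [].
    move=> h0 h1 h2 [h3 _] h4; split.
      apply: le_trans h3; rewrite ler_wpM2l // mulr_ge0 //; lra.
    rewrite -[X in _ <= X]mul1r ler_wpM2r //.
  move=> r' r'0 hr'; have := paysum_le b1 bi ys X r'; rewrite hr' -/(U ys) -/Um => h.
  by rewrite /r0 ler_pdivrMr.
have := Hmin ys (Some r0) ysX spec_ys; clear Hmin.
case: ro spec_xw => [r|] //= [r0' [hpay _]] rle.
have h := paysum_le b1 bi xw X r; rewrite hpay -/(U xw) in h.
have Ux := ysmax xw xwX; rewrite -/Um in Ux.
have Uxge := Uge0 xw.
have h1 : r * U xw <= r0 * U xw by rewrite ler_wpM2r.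
have h2 : r0 * U xw <= r0 * Um by rewrite ler_wpM2l //; lra.
have eU : U xw = Um.
  apply/eqP; rewrite eq_le; apply/andP; split => //; rewrite -(ler_pM2l r0pos); lra.
have er : r = r0.
  apply/eqP; rewrite eq_le; apply/andP; split => //; rewrite -(ler_pM2r Umpos); rewrite eU in h; lra.
split; first by rewrite er /r0 -/(U xw) eU.
split; first by move=> y yX; rewrite -/(U y) -/(U xw) eU; exact: ysmax.
move=> s; rewrite /payment er.
have [_ hb] := biK s.
apply: le_trans hb; rewrite ler_wpM2l ?ler0n //.
rewrite ge_min; apply/orP; left.
rewrite ler_wpM2l ?uK // mulr_ge0 ?b1ge0 //; lra.
Qed.

Lemma card_remaining m (x : nat -> 'I_m) j :
  (m - j.-1 <= #|remaining x j|)%N.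
Proof.
have -> : remaining x j = ~: [set y in map x (iota 1 j.-1)].
  by apply/setP => y; rewrite !inE.
have := cardsC [set y in map x (iota 1 j.-1)].
rewrite cardsE [X in _ = X]card_ord => E.
have := card_size (map x (iota 1 j.-1)); rewrite size_map size_iota => h.
rewrite leq_subLR; apply: leq_trans (eq_leq (esym E)) _; by rewrite leq_add2r.
Qed.

Unset Implicit Arguments.

Theorem mainTheorem7 (R : realType) (m : nat) (P : 'S_m -> R)
  (x : nat -> 'I_m) (rho : nat -> option R) (b : nat -> 'S_m -> R) :
  (forall s, 0 <= P s) -> \sum_(s : 'S_m) P s = 1 ->
  RMES_run P x rho b ->
  forall i : nat, (1 <= i <= m %/ 4)%N ->
    let Xi := [set y in map x (iota i (m - i).+1)] in
    rho i = Some ((m - i)%:R / U_score (b 1%N) (x i) Xi) /\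
    (forall y, y \in Xi -> U_score (b 1%N) y Xi <= U_score (b 1%N) (x i) Xi).
Proof.
move=> P0 Psum [Hb1 [Hr Hend]] i /andP[i1 im4].
have m4 : (4 <= m)%N by lia.
have b1ge0 : forall s, 0 <= b 1%N s.
  by move=> s; rewrite Hb1 mulr_ge0.
have sumb1 : \sum_s b 1%N s = ('C(m, 2))%:R.
  by under eq_bigr do rewrite Hb1; rewrite -mulr_suml Psum mul1r.
have F1 : forall k, (1 <= k <= m - 2)%N -> x k \notin map x (iota 1 k.-1).
  move=> k hk; have [h _] := Hr k hk; by rewrite inE in h.
have [Hne [Hrem _]] := Hend (leq_trans (isT : (2 <= 4)%N) m4).
have F2 : forall k, (m - 1 <= k <= m)%N -> x k \notin map x (iota 1 (m.-1).-1).
  move=> k hk.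
  have : x k \in remaining x m.-1.
    rewrite Hrem !inE; have [->|->] : k = m.-1 \/ k = m by lia.
      by rewrite eqxx.
    by rewrite eqxx orbT.
  by rewrite inE.
have inj : forall j k, (1 <= j)%N -> (j < k)%N -> (k <= m)%N -> x j != x k.
  move=> j k j1 jk km.
  case: (leqP k (m - 2)) => hk.
    have := F1 k; rewrite hk andbT (leq_trans j1 (ltnW jk)) => /(_ isT).
    apply: contra => /eqP <-; apply: map_f; rewrite mem_iota; lia.
  case: (leqP j (m - 2)) => hj.
    have := F2 k; rewrite (_ : (m - 1 <= k)%N) ?km //; last by lia.
    move=> /(_ isT); apply: contra => /eqP <-; apply: map_f; rewrite mem_iota; lia.
  have -> : j = m.-1 by lia.
  have -> : k = m by lia.
  exact: Hne.
have surj : forall y, exists2 k, (1 <= k <= m)%N & x k = y.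
  move=> y; case: (boolP (y \in map x (iota 1 (m.-1).-1))).
    case/mapP => k; rewrite mem_iota => hk ->; exists k => //; lia.
  move=> hy; have : y \in remaining x m.-1 by rewrite inE.
  rewrite Hrem !inE => /orP[/eqP ->|/eqP ->]; [exists m.-1 | exists m] => //; lia.
have XiE : [set y in map x (iota i (m - i).+1)] = remaining x i.
  apply/setP => y; rewrite !in_set; apply/idP/idP.
    case/mapP => k; rewrite mem_iota => hk ->.
    apply/negP => /mapP [j]; rewrite mem_iota => hj E.
    have : x j != x k by apply: inj; lia.
    by rewrite E eqxx.
  have [k hk <-] := surj y; case: (ltnP k i) => hki.
    by move/negP; case; apply: map_f; rewrite mem_iota; lia.
  by move=> _; apply: map_f; rewrite mem_iota; lia.
have step : forall j, (1 <= j <= m %/ 4)%N ->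
   (forall s, m%:R * (b 1%N s - b j s) <= (4 * (j - 1))%:R * b 1%N s) ->
   rho j = Some ((m - j)%:R / U_score (b 1%N) (x j) (remaining x j)) /\
   (forall y, y \in remaining x j ->
      U_score (b 1%N) y (remaining x j) <= U_score (b 1%N) (x j) (remaining x j)) /\
   (forall s, m%:R * (b 1%N s - b j.+1 s) <= (4 * j)%:R * b 1%N s).
  move=> j /andP[j1 jm] Hinv.
  have [xjX [spec [Hmin Hupd]]] := Hr j (ltac:(lia)).
  have := @round R m (b 1%N) (b j) (remaining x j) (m - j) (x j) (rho j) b1ge0 sumb1.
  case/(_ _ _ _ _ xjX spec Hmin).
  - lia.
  - lia.
  - have := card_remaining x j; lia.
  - move=> s; have := Hinv s; have := b1ge0 s.
    have h4 : (4 * j)%:R <= m%:R :> R by rewrite ler_nat; lia.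
    have e4 : (4 * (j - 1))%:R = 4 * (j%:R - 1) :> R by rewrite natrM natrB.
    rewrite natrM in h4; rewrite e4 => h0 h1; nra.
  move=> e [amax pay]; split => //; split => //.
  move=> s; have := pay s; have := Hinv s; rewrite Hupd.
  have e4 : (4 * (j - 1))%:R = 4 * (j%:R - 1) :> R by rewrite natrM natrB.
  rewrite e4 natrM => h1 h2; nra.
have inv : forall j, (1 <= j <= (m %/ 4).+1)%N ->
   forall s, m%:R * (b 1%N s - b j s) <= (4 * (j - 1))%:R * b 1%N s.
  elim=> [//|j IH] /andP[_ hj] s.
  case: (posnP j) => [->|j0]; first by rewrite subrr mulr0 subnn muln0 mul0r.
  have := step j (ltac:(lia)) (IH (ltac:(lia))) => -[_ [_ H]].
  by rewrite subn1 /=.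
move=> Xi; rewrite /Xi XiE.
have [e [amax _]] := step i (ltac:(lia)) (inv i (ltac:(lia))).
by split.
Qed.
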